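(* Let $(G,M,\Delta)$ be a Garside structure and $(H,N,\delta)$ a parabolic substructure with $H\neq G$ and $H\neq\{1\}$. Let $\mathcal S=\mathrm{Div}(\Delta)\setminus\{1\}$ and $d$ the word metric on $G$ with respect to $\mathcal S$. Then $G$ does not have bounded projections on $H$: there is no constant $K>0$ such that $\mathrm{diam}(\pi_H(\alpha_1)\cup\pi_H(\alpha_2))\le K$ for all $\alpha_1,\alpha_2\in G$ with $d(\alpha_1,\alpha_2)=1$.
   Context: Let $G$ be a group and $M$ a submonoid with $M\cap M^{-1}=\{1\}$. Define $\alpha\le_L\beta$ iff $\alpha^{-1}\beta\in M$, and $\alpha\le_R\beta$ iff $\beta\alpha^{-1}\in M$. For $a\in M$ let $\mathrm{Div}_L(a)=\{b\in M: b\le_L a\}$, $\mathrm{Div}_R(a)=\{b\in M: b\le_R a\}$; $a$ is balanced if these coincide, and then $\mathrm{Div}(a)$ denotes this set. $M$ is Noetherian if each $a\in M$ admits an $n$ such that $a$ is not a product of more than $n$ non-trivial factors. A Garside structure $(G,M,\Delta)$: $\Delta\in M$ balanced, $M$ Noetherian, $\mathrm{Div}(\Delta)$ finite and generating $M$ as a monoid and $G$ as a group, $(G,\le_L)$ a lattice. A parabolic substructure $(H,N,\delta)$: $\delta\in M$ balanced, $H$ (resp. $N$) the subgroup (resp. submonoid) generated by $\mathrm{Div}(\delta)$, and $\mathrm{Div}(\delta)=\mathrm{Div}(\Delta)\cap N$. $d(\alpha,\beta)=\lg(\alpha^{-1}\beta)$ with $\lg$ word length w.r.t. $\mathcal S$;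 $d(\alpha,H)=\min_{\beta\in H}d(\alpha,\beta)$; $\pi_H(\alpha)=\{\beta\in H: d(\alpha,\beta)=d(\alpha,H)\}$; $\mathrm{diam}(X)=\max\{d(\alpha,\beta):\alpha,\beta\in X\}$. *)

(* Defs.v *)
From HB Require Import structures.
From Stdlib Require Import ClassicalEpsilon.
From mathcomp Require Import all_boot.

Set Implicit Arguments.
Unset Strict Implicit.
Unset Printing Implicit Defensive.

Local Open Scope group_scope.

Section Garside.
Variable G : groupType.

Definition is_submonoid (M : G -> Prop) : Prop :=
  M 1 /\ (forall a b, M a -> M b -> M (a * b)).

Definition pointed (M : G -> Prop) : Prop :=
  forall a, M a -> M a^-1 -> a = 1.

Definition leL (M : G -> Prop) (a b : G) : Prop := M (a^-1 * b).
Definition leR (M : G -> Prop) (a b : G) : Prop := M (b * a^-1).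

(** Div_L(a) and Div_R(a): [DivL M a b] means b \in Div_L(a). *)
Definition DivL (M : G -> Prop) (a b : G) : Prop := M b /\ leL M b a.
Definition DivR (M : G -> Prop) (a b : G) : Prop := M b /\ leR M b a.

Definition balanced (M : G -> Prop) (a : G) : Prop :=
  M a /\ (forall b, DivL M a b <-> DivR M a b).

(** Div(a) for a balanced a (the common value of Div_L(a) = Div_R(a)). *)
Definition Div (M : G -> Prop) (a b : G) : Prop := DivL M a b.

Definition noetherian (M : G -> Prop) : Prop :=
  forall a, M a -> exists n : nat,
    forall w : seq G, (forall x, x \in w -> M x /\ x <> 1) ->
      \prod_(x <- w) x = a -> size w <= n.

Definition gen_monoid (X : G -> Prop) (g : G) : Prop :=
  exists w : seq G, (forall x, x \in w -> X x) /\ g = \prod_(x <- w) x.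

Definition gen_group (X : G -> Prop) (g : G) : Prop :=
  exists w : seq G, (forall x, x \in w -> X x \/ X x^-1) /\ g = \prod_(x <- w) x.

Definition finite_set (X : G -> Prop) : Prop :=
  exists s : seq G, forall x, X x -> x \in s.

Definition is_lattice (le : G -> G -> Prop) : Prop :=
  forall a b : G,
    (exists m, le m a /\ le m b /\ (forall c, le c a -> le c b -> le c m)) /\
    (exists j, le a j /\ le b j /\ (forall c, le a c -> le b c -> le j c)).

Definition garside_structure (M : G -> Prop) (Delta : G) : Prop :=
  is_submonoid M /\ pointed M /\
  balanced M Delta /\ noetherian M /\
  finite_set (Div M Delta) /\
  (forall g, M g <-> gen_monoid (Div M Delta) g) /\
  (forall g, gen_group (Div M Delta) g) /\
  is_lattice (leL M).

Definition para_group (M : G -> Prop) (delta : G) : G -> Prop :=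
  gen_group (Div M delta).
Definition para_monoid (M : G -> Prop) (delta : G) : G -> Prop :=
  gen_monoid (Div M delta).

(** Parabolic substructure (H, N, delta) of (G, M, Delta), with
    H = para_group M delta and N = para_monoid M delta. *)
Definition parabolic_substructure (M : G -> Prop) (Delta delta : G) : Prop :=
  M delta /\ balanced M delta /\
  (forall b, Div M delta b <-> (Div M Delta b /\ para_monoid M delta b)).

Definition garside_gens (M : G -> Prop) (Delta : G) (x : G) : Prop :=
  Div M Delta x /\ x <> 1.

Definition word_of_len (S : G -> Prop) (g : G) (n : nat) : Prop :=
  exists w : seq G, size w = n /\ (forall x, x \in w -> S x \/ S x^-1) /\
                    g = \prod_(x <- w) x.

(** Word length lg w.r.t. S: the least such n (arbitrary if g is not
    generated by S, which never happens for a generating set). *)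
Definition lg (S : G -> Prop) (g : G) : nat :=
  epsilon (inhabits 0%N)
    (fun n => word_of_len S g n /\ forall m, word_of_len S g m -> n <= m).

Definition wdist (S : G -> Prop) (a b : G) : nat := lg S (a^-1 * b).

Definition proj (S : G -> Prop) (H : G -> Prop) (a b : G) : Prop :=
  H b /\ forall b', H b' -> wdist S a b <= wdist S a b'.

Definition diam_le (S : G -> Prop) (X : G -> Prop) (K : nat) : Prop :=
  forall x y, X x -> X y -> wdist S x y <= K.

End Garside.

(* Main.v *)
Require Import Defs.
From HB Require Import structures.
From Stdlib Require Import ClassicalEpsilon Classical.
From mathcomp Require Import all_boot.
Set Implicit Arguments.
Unset Strict Implicit.
Unset Printing Implicit Defensive.
Local Open Scope group_scope.

Lemma div_facts (G : groupType) (M : G -> Prop) e t : balanced M e -> Div M e t ->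
  [/\ Div M e (e * t^-1), Div M e (t^-1 * e), Div M e (e * t * e^-1)
    & Div M e (e^-1 * t * e)].
Proof.
move=> [Me Hb] Ht.
have HtR : DivR M e t by apply/Hb.
case: Ht => Mt Mte; case: HtR => _ Meti.
have Da : Div M e (e * t^-1).
  by split => //; rewrite /leL invgM invgK mulgVK.
have Du : Div M e (t^-1 * e).
  apply/Hb; split => //; by rewrite /leR invgM invgK mulVKg.
split => //.
- have [_ H1] : DivR M e (e * t^-1) by apply/Hb.
  split; first by move: H1; rewrite /leR invgM invgK mulgA.
  by rewrite /leL !invgM invgK mulgA mulgVK; case: Da.
- case: Du => _ H1; apply/Hb; split.
    by move: H1; rewrite /leL invgM invgK.
  by rewrite /leR !invgM invgK mulgA mulgV mul1g.
Qed.

Lemma conjM (G : groupType) (M : G -> Prop) e : is_submonoid M -> balanced M e ->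
  (forall g, M g <-> gen_monoid (Div M e) g) ->
  forall X, M X -> M (e * X * e^-1) /\ M (e^-1 * X * e).
Proof.
move=> [M1 MM] be Hg X /Hg [w [Hw ->]].
elim: w Hw => [|a w IH] Hw.
  by rewrite big_nil !mulg1 mulgV mulVg.
rewrite big_cons.
have [Ha Hb] : M (e * a * e^-1) /\ M (e^-1 * a * e).
  have [_ _ [H1 _] [H2 _]] := div_facts be (Hw a (mem_head _ _)).
  by [].
have [I1 I2] := IH (fun x xw => Hw x (introT orP (or_intror xw))).
split.
  have -> : e * (a * \prod_(x <- w) x) * e^-1 =
    (e * a * e^-1) * (e * (\prod_(x <- w) x) * e^-1) by rewrite !mulgA mulgVK.
  exact: MM.
have -> : e^-1 * (a * \prod_(x <- w) x) * e =
    (e^-1 * a * e) * (e^-1 * (\prod_(x <- w) x) * e) by rewrite !mulgA mulgK.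
exact: MM.
Qed.

Lemma wol_cat (G : groupType) (X : G -> Prop) g1 g2 l1 l2 :
  word_of_len X g1 l1 -> word_of_len X g2 l2 -> word_of_len X (g1 * g2) (l1 + l2).
Proof.
move=> [w1 [s1 [h1 ->]]] [w2 [s2 [h2 ->]]].
exists (w1 ++ w2); split; first by rewrite size_cat s1 s2.
split; last by rewrite big_cat.
by move=> x; rewrite mem_cat => /orP [] ?; [apply: h1 | apply: h2].
Qed.

Lemma wol_nil (G : groupType) (X : G -> Prop) : word_of_len X 1 0.
Proof. by exists [::]; split => //; split => //; rewrite big_nil. Qed.

Lemma wol_letter (G : groupType) (X : G -> Prop) x : X x \/ X x^-1 -> word_of_len X x 1.
Proof.
move=> Hx; exists [:: x]; split => //; split; last by rewrite big_cons big_nil mulg1.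
by move=> y; rewrite mem_seq1 => /eqP ->.
Qed.

Lemma wol_conj (G : groupType) (M : G -> Prop) e g l : balanced M e ->
  word_of_len (Div M e) g l -> word_of_len (Div M e) (e^-1 * g * e) l.
Proof.
move=> be [w [<- [Hw ->]]].
elim: w Hw => [|a w IH] Hw.
  by rewrite big_nil mulg1 mulVg; apply: wol_nil.
rewrite big_cons.
have -> : e^-1 * (a * \prod_(x <- w) x) * e =
    (e^-1 * a * e) * (e^-1 * (\prod_(x <- w) x) * e) by rewrite !mulgA mulgK.
apply: (@wol_cat _ _ _ _ 1); last by apply: IH => x xw; apply: Hw; rewrite in_cons xw orbT.
apply: wol_letter.
case: (Hw a (mem_head _ _)) => Ha.
  by left; have [] := div_facts be Ha.
right; have [_ _ _ H] := div_facts be Ha.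
by rewrite !invgM invgK mulgA.
Qed.

Lemma wol_S (G : groupType) (M : G -> Prop) Delta g l :
  word_of_len (Div M Delta) g l ->
  exists l', l' <= l /\ word_of_len (garside_gens M Delta) g l'.
Proof.
move=> [w [<- [Hw ->]]].
elim: w Hw => [|a w IH] Hw.
  by exists 0; split => //; rewrite big_nil; apply: wol_nil.
have [l' [le' Hw']] := IH (fun x xw => Hw x (introT orP (or_intror xw))).
rewrite big_cons.
case: (eqVneq a 1) => [->|na1].
  by exists l'; rewrite mul1g; split => //; apply: leqW.
exists l'.+1; split => //.
apply: (@wol_cat _ _ _ _ 1) => //; apply: wol_letter.
case: (Hw a (mem_head _ _)) => Ha; [left|right]; split => //.
  by move/eqP: na1.
by move=> /eqP; rewrite invg_eq1; apply/negP.
Qed.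

Lemma min_exists (P : nat -> Prop) : (exists n, P n) ->
  exists n, P n /\ forall m, P m -> n <= m.
Proof.
move=> [n Pn].
have H : forall N n, n <= N -> P n -> exists k, P k /\ forall m, P m -> k <= m.
  elim=> [|N IH] k lekN Pk.
    exists k; split => // m _.
    by move: lekN; rewrite leqn0 => /eqP ->.
  case: (classic (exists m, m < k /\ P m)) => [[m [ltmk Pm]]|nomin].
    by apply: (IH m) => //; rewrite -ltnS (leq_trans ltmk lekN).
  exists k; split => // m Pm; rewrite leqNgt; apply/negP => ltmk.
  by apply: nomin; exists m.
exact: (H n n).
Qed.

Lemma lg_spec (G : groupType) (M : G -> Prop) Delta :
  (forall g, gen_group (Div M Delta) g) -> forall g,
  word_of_len (garside_gens M Delta) g (lg (garside_gens M Delta) g) /\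
  forall m, word_of_len (garside_gens M Delta) g m -> lg (garside_gens M Delta) g <= m.
Proof.
move=> gen g.
pose S := garside_gens M Delta.
pose P := fun n => word_of_len S g n /\ forall m, word_of_len S g m -> n <= m.
have Hex : exists n, P n.
  apply: min_exists.
  have [w [Hw Eg]] := gen g.
  have Hw' : word_of_len (Div M Delta) g (size w) by exists w.
  have [l' [_ H]] := wol_S Hw'.
  by exists l'.
exact: (epsilon_spec (inhabits 0%N) P Hex).
Qed.

Lemma lg_le (G : groupType) (M : G -> Prop) Delta g l :
  (forall g, gen_group (Div M Delta) g) ->
  word_of_len (Div M Delta) g l -> lg (garside_gens M Delta) g <= l.
Proof.
move=> gen /wol_S [l' [le' H]].
by apply: leq_trans le'; apply: (proj2 (lg_spec gen g)).
Qed.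

Lemma lg0 (G : groupType) (M : G -> Prop) Delta g :
  (forall g, gen_group (Div M Delta) g) ->
  lg (garside_gens M Delta) g = 0 -> g = 1.
Proof.
move=> gen H0; have [[w [sw [_ ->]]] _] := lg_spec gen g.
by move: sw; rewrite H0; case: w => // _; rewrite big_nil.
Qed.

Lemma prod_M (G : groupType) (M : G -> Prop) (X : G -> Prop) w : is_submonoid M ->
  (forall x, X x -> M x) -> (forall x, x \in w -> X x) -> M (\prod_(x <- w) x).
Proof.
move=> [M1 MM] XM; elim: w => [|a w IH] Hw; first by rewrite big_nil.
rewrite big_cons; apply: (MM); first by apply/XM/Hw/mem_head.
by apply: IH => x xw; apply: Hw; rewrite in_cons xw orbT.
Qed.

Lemma pow_M (G : groupType) (M : G -> Prop) e p : is_submonoid M -> M e -> M (e ^+ p).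
Proof.
move=> [M1 MM] Me; elim: p => [|p IH]; first by rewrite expg0.
by rewrite expgS; apply: (MM).
Qed.

Lemma low_step (G : groupType) (M : G -> Prop) Delta : is_submonoid M -> balanced M Delta ->
  (forall g, M g <-> gen_monoid (Div M Delta) g) ->
  forall w j g0, (forall x, x \in w -> Div M Delta x \/ Div M Delta x^-1) ->
  M (Delta ^+ j * g0) -> M (Delta ^+ (j + size w) * (g0 * \prod_(x <- w) x)).
Proof.
move=> Msub be gen; have [M1 MM] := Msub.
have MD : M Delta by case: be.
elim=> [|a w IH] j g0 Hw Mj; first by rewrite addn0 big_nil mulg1.
rewrite big_cons /= -addSnnS [g0 * _]mulgA; apply: IH.
  by move=> x xw; apply: Hw; rewrite in_cons xw orbT.
case: (Hw a (mem_head _ _)) => Ha.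
  have -> : Delta ^+ j.+1 * (g0 * a) = Delta * (Delta^+j * g0) * a by rewrite expgS !mulgA.
  by apply: (MM); [apply: (MM) | case: Ha].
have -> : Delta ^+ j.+1 * (g0 * a) = (Delta * (Delta^+j * g0) * Delta^-1) * (Delta * a)
  by rewrite expgS !mulgA mulgVK.
apply: (MM); first by apply: (proj1 (conjM Msub be gen Mj)).
have [[H _] _ _ _] := div_facts be Ha.
by move: H; rewrite invgK.
Qed.

Lemma low_bound (G : groupType) (M : G -> Prop) Delta g l : is_submonoid M -> balanced M Delta ->
  (forall g, M g <-> gen_monoid (Div M Delta) g) ->
  word_of_len (garside_gens M Delta) g l -> M (Delta ^+ l * g).
Proof.
move=> Msub be gen [w [<- [Hw ->]]].
have H := @low_step _ _ _ Msub be gen w 0 1.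
rewrite add0n (mul1g (\prod_(x <- w) x)) in H; apply: H.
  by move=> x /Hw [[]|[]]; [left|right].
by rewrite expg0 mulg1; case: Msub.
Qed.

Lemma conj_pow (G : groupType) (M : G -> Prop) e t p : balanced M e -> Div M e t ->
  Div M e (e ^+ p * t * (e ^+ p)^-1).
Proof.
move=> be Ht; elim: p => [|p IH]; first by rewrite expg0 invg1 mul1g mulg1.
have [_ _ H _] := div_facts be IH.
by move: H; rewrite expgS invgM !mulgA.
Qed.

Lemma gm_mul (G : groupType) (X : G -> Prop) a b :
  gen_monoid X a -> gen_monoid X b -> gen_monoid X (a * b).
Proof.
move=> [w1 [h1 ->]] [w2 [h2 ->]]; exists (w1 ++ w2); split; last by rewrite big_cat.
by move=> x; rewrite mem_cat => /orP [] ?; [apply: h1 | apply: h2].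
Qed.

Lemma gm_letter (G : groupType) (X : G -> Prop) a : X a -> gen_monoid X a.
Proof.
move=> Ha; exists [:: a]; split; last by rewrite big_cons big_nil mulg1.
by move=> y; rewrite mem_seq1 => /eqP ->.
Qed.

Lemma H_decomp (G : groupType) (M : G -> Prop) delta : balanced M delta ->
  forall h, gen_group (Div M delta) h -> exists p, gen_monoid (Div M delta) (delta ^+ p * h).
Proof.
move=> be h [w [Hw ->]].
elim: w Hw => [|a w IH] Hw.
  by exists 0; rewrite big_nil expg0 mulg1; exists [::]; rewrite big_nil.
have [p Hp] := IH (fun x xw => Hw x (introT orP (or_intror xw))).
rewrite big_cons.
case: (Hw a (mem_head _ _)) => Ha.
  exists p.
  have -> : delta ^+ p * (a * \prod_(x <- w) x) =
     (delta ^+ p * a * (delta ^+ p)^-1) * (delta ^+ p * \prod_(x <- w) x)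
    by rewrite !mulgA mulgVK.
  by apply: gm_mul Hp; apply: gm_letter; apply: conj_pow.
exists p.+1.
have -> : delta ^+ p.+1 * (a * \prod_(x <- w) x) =
   (delta ^+ p * (delta * a) * (delta ^+ p)^-1) * (delta ^+ p * \prod_(x <- w) x)
  by rewrite expgSr !mulgA mulgVK.
apply: gm_mul Hp; apply: gm_letter; apply: conj_pow => //.
by have [H _ _ _] := div_facts be Ha; move: H; rewrite invgK.
Qed.

Lemma claim (G : groupType) (M : G -> Prop) Delta delta :
  is_submonoid M -> pointed M -> balanced M Delta ->
  (forall g, M g <-> gen_monoid (Div M Delta) g) -> is_lattice (leL M) ->
  balanced M delta ->
  (forall b, Div M delta b <-> (Div M Delta b /\ para_monoid M delta b)) ->
  forall w, (forall t, t \in w -> Div M delta t) ->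
  forall x, Div M Delta x -> leL M x (\prod_(t <- w) t) -> Div M delta x.
Proof.
move=> Msub pt bD gen lat bd Hpar; have [M1 MM] := Msub.
have Md : M delta by case: bd.
elim=> [|t w IH] Hw x Dx.
  rewrite big_nil /leL mulg1 => Mxi.
  have x1 : x = 1 by apply: pt => //; case: Dx.
  by rewrite x1; split => //; rewrite /leL invg1 mul1g.
rewrite big_cons => lex.
have Dt : Div M delta t by apply/Hw/mem_head.
have DDt : Div M Delta t by have [/(_ Dt) []] := Hpar t.
have Hw' : forall t, t \in w -> Div M delta t.
  by move=> y yw; apply: Hw; rewrite in_cons yw orbT.
have MP : M (\prod_(t <- w) t) by apply: (prod_M Msub _ Hw') => y [].
have [[_ _] [j [xj [tj jmin]]]] := lat x t.
have jtP : leL M j (t * \prod_(t <- w) t).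
  apply: jmin => //; by rewrite /leL mulKg.
have jD : leL M j Delta by apply: jmin; [case: Dx | case: DDt].
have Mj : M j by have := MM _ _ (proj1 Dx) xj; rewrite mulVKg.
pose c := t^-1 * j.
have Mc : M c by [].
have cP : leL M c (\prod_(t <- w) t).
  by move: jtP; rewrite /leL /c invgM invgK !mulgA.
have Dc : Div M Delta c.
  split => //; rewrite /leL /c invgM invgK.
  have -> : j^-1 * t * Delta = (j^-1 * Delta) * (Delta^-1 * t * Delta)
    by rewrite !mulgA mulgK.
  apply: (MM) => //; apply: (proj2 (conjM Msub bD gen _)); by case: Dt.
have Ddc := IH Hw' c Dc cP.
have Pj : para_monoid M delta j.
  have -> : j = t * c by rewrite /c mulVKg.
  apply: gm_mul; first by apply: gm_letter.
  by have [/(_ Ddc) []] := Hpar c.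
have Ddj : Div M delta j by apply/Hpar; split.
split; first by case: Dx.
rewrite /leL.
have -> : x^-1 * delta = (x^-1 * j) * (j^-1 * delta) by rewrite !mulgA mulgK.
by apply: (MM) => //; case: Ddj.
Qed.

From mathcomp Require Import zify.

Lemma lower (G : groupType) (M : G -> Prop) Delta delta m h :
  garside_structure M Delta -> parabolic_substructure M Delta delta ->
  Delta <> delta -> para_group M delta h ->
  m <= lg (garside_gens M Delta) ((Delta ^+ m)^-1 * h).
Proof.
move=> [Msub [pt [bD [_ [_ [gen [ggen lat]]]]]]] [Md [bd Hpar]] nD Hh.
have [M1 MM] := Msub.
have MD : M Delta by case: bD.
set l := lg _ _.
rewrite leqNgt; apply/negP => ltlm.
have Ml : M (Delta ^+ l * ((Delta ^+ m)^-1 * h)).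
  apply: low_bound => //; exact: (proj1 (lg_spec ggen _)).
have [p [w [Hw Ew]]] := H_decomp bd Hh.
pose q := m - l.+1.
have Em : m = q.+1 + l by rewrite /q; lia.
have lD : leL M Delta (\prod_(t <- w) t).
  rewrite /leL -Ew.
  have -> : Delta^-1 * (delta ^+ p * h) =
     (Delta^-1 * delta ^+ p * Delta) * Delta ^+ q * (Delta ^+ l * ((Delta ^+ m)^-1 * h)).
    by rewrite Em expgnDr expgS !invgM !mulgA !mulgK.
  apply: (MM) => //; apply: (MM); last exact: pow_M.
  by apply: (proj2 (conjM Msub bD gen _)); apply: pow_M.
have DD : Div M Delta Delta by split => //; rewrite /leL mulVg.
have [_ Hdd] := claim Msub pt bD gen lat bd Hpar Hw DD lD.
have Ddd : Div M delta delta by split => //; rewrite /leL mulVg.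
have [[_ Hdd'] _] := proj1 (Hpar delta) Ddd.
apply: nD.
have a1 : delta^-1 * Delta = 1.
  by apply: pt => //; rewrite invgM invgK.
by have := mulg1_eq a1; rewrite invgK.
Qed.

Lemma upper (G : groupType) (M : G -> Prop) Delta delta m k :
  is_submonoid M -> balanced M Delta -> Div M Delta delta -> k <= m ->
  word_of_len (Div M Delta) ((Delta ^+ m)^-1 * delta ^+ k) m.
Proof.
move=> [M1 MM] bD Dd km.
have MD : M Delta by case: bD.
have DD : Div M Delta Delta by split => //; rewrite /leL mulVg.
have A1 : forall j, word_of_len (Div M Delta) ((Delta ^+ j)^-1) j.
  elim=> [|j IH]; first by rewrite expg0 invg1; apply: wol_nil.
  rewrite expgSr invgM -addn1 addnC; apply: wol_cat => //.
  by apply: wol_letter; right; rewrite invgK.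
have A2 : forall j, word_of_len (Div M Delta) ((Delta ^+ j)^-1 * delta ^+ j) j.
  elim=> [|j IH]; first by rewrite !expg0 invg1 mul1g; apply: wol_nil.
  have -> : (Delta ^+ j.+1)^-1 * delta ^+ j.+1 =
     (Delta^-1 * ((Delta ^+ j)^-1 * delta ^+ j) * Delta) * (Delta^-1 * delta).
    by rewrite !expgSr invgM !mulgA mulgK.
  rewrite -addn1; apply: wol_cat; first by apply: wol_conj.
  apply: wol_letter; right; rewrite invgM invgK.
  by have [_ H _ _] := div_facts bD Dd.
have -> : m = (m - k) + k by rewrite subnK.
rewrite {1}addnC expgnDr invgM -mulgA.
apply: wol_cat => //.
Qed.

Fixpoint words (T : Type) (A : seq T) (n : nat) : seq (seq T) :=
  if n is n'.+1 then [seq a :: w | a <- A, w <- words A n'] else [:: [::]].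

Lemma mem_words (T : eqType) (A : seq T) w : all (mem A) w -> w \in words A (size w).
Proof.
elim: w => [|a w IH] //= /andP [aA wA].
by apply: allpairs_f => //; apply: IH.
Qed.

Lemma ball_in (G : groupType) (M : G -> Prop) Delta K (s : seq G) :
  (forall g, gen_group (Div M Delta) g) -> (forall x, Div M Delta x -> x \in s) ->
  forall g, lg (garside_gens M Delta) g <= K ->
  g \in map (fun w => \prod_(x <- w) x) (words (1 :: s ++ map (fun x => x^-1) s) K).
Proof.
move=> ggen Hs g lgK.
have [[w [sw [Hw Eg]]] _] := lg_spec ggen g.
pose w' := w ++ nseq (K - size w) 1.
have sw' : size w' = K by rewrite size_cat size_nseq subnKC // sw.
rewrite -sw'.
have -> : g = \prod_(x <- w') x.
  have E1 : forall n, \prod_(x <- nseq n 1) x = 1 :> G.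
    by elim=> [|n IH]; rewrite ?big_nil //= big_cons IH mulg1.
  have E2 : forall w1 w2 : seq G, \prod_(x <- w1 ++ w2) x = \prod_(x <- w1) x * \prod_(x <- w2) x.
    by elim=> [|a w1 IH] w2; rewrite ?big_nil ?mul1g //= !big_cons IH mulgA.
  by rewrite E2 E1 mulg1 Eg.
apply: map_f; apply: mem_words.
rewrite all_cat; apply/andP; split.
  apply/allP => x /Hw [[Dx _]|[Dx _]]; rewrite /= in_cons mem_cat.
    by rewrite (Hs x Dx) orbT.
  have : x^-1^-1 \in [seq y^-1 | y <- s] := map_f _ (Hs _ Dx).
  by rewrite invgK => ->; rewrite !orbT.
apply/allP => y; rewrite mem_nseq => /andP [_ /eqP ->].
by rewrite /= in_cons eqxx.
Qed.

Unset Implicit Arguments.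
Set Strict Implicit.

Theorem corollary5p4 (G : groupType) (M : G -> Prop) (Delta delta : G) :
  garside_structure M Delta ->
  parabolic_substructure M Delta delta ->
  (exists g : G, ~ para_group M delta g) ->
  (exists h : G, para_group M delta h /\ h <> 1) ->
  ~ (exists K : nat, (0 < K)%N /\
       forall a1 a2 : G,
         wdist (garside_gens M Delta) a1 a2 = 1%N ->
         diam_le (garside_gens M Delta)
           (fun b => proj (garside_gens M Delta) (para_group M delta) a1 b \/
                     proj (garside_gens M Delta) (para_group M delta) a2 b) K).
Proof.
move=> gs ps [g0 ng0] [h0 [Hh0 nh0]] [K [K0 HK]].
have gs' := gs.
move: gs' => [Msub [pt [bD [noeth [[s Hs] [gen [ggen lat]]]]]]].
have [Md [bd Hpar]] := ps.
have [M1 MM] := Msub.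
set S := garside_gens M Delta.
have Ddd : Div M delta delta by split => //; rewrite /leL mulVg.
have DDd : Div M Delta delta by have [] := proj1 (Hpar delta) Ddd.
have nD : Delta <> delta.
  by move=> E; apply: ng0; rewrite /para_group -E; apply: ggen.
have d1 : delta <> 1.
  move=> E; apply: nh0; move: Hh0 => [w [Hw ->]].
  rewrite big1_seq // => x /andP [_ xw].
  have one : forall y, Div M delta y -> y = 1.
    by move=> y [My]; rewrite /leL E mulg1 => Myi; apply: pt.
  case: (Hw x xw) => [/one //|/one Ex].
  by rewrite -[x]invgK Ex invg1.
have inj : forall i j, delta ^+ i = delta ^+ j -> i = j.
  have nope : forall i d, delta ^+ (i + d.+1) <> delta ^+ i.
    move=> i d; rewrite expgnDr -{2}[delta ^+ i]mulg1 => /mulgI.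
    rewrite expgS => /mulg1_eq Ed; apply: d1; apply: pt => //.
    by rewrite Ed; apply: pow_M.
  move=> i j E; case: (ltngtP i j) => [lt|lt|] //; exfalso.
    have Ej : j = i + (j - i.+1).+1 by lia.
    by move: E; rewrite Ej => /esym; apply: nope.
  have Ei : i = j + (i - j.+1).+1 by lia.
  by move: E; rewrite Ei; apply: nope.
pose A := 1 :: s ++ map (fun x => x^-1) s.
pose L := map (fun w => \prod_(x <- w) x) (words A K).
pose m := size L.
pose a1 := Delta ^+ m.
pose a2 := a1 * delta.
have lgd : lg S delta = 1%N.
  have le1 : lg S delta <= 1%N := lg_le ggen (wol_letter (or_introl DDd)).
  have ne0 : lg S delta <> 0 by move/(lg0 ggen).
  lia.
have w12 : wdist S a1 a2 = 1%N by rewrite /wdist /a2 mulKg.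
have Hd := HK a1 a2 w12.
have projk : forall k, k <= m -> proj S (para_group M delta) a1 (delta ^+ k).
  move=> k km; split.
    exists (nseq k delta); split.
      by move=> x; rewrite mem_nseq => /andP [_ /eqP ->]; left.
    by elim: k {km} => [|k IH]; rewrite ?big_nil //= big_cons -IH expgS.
  move=> b' Hb'; rewrite /wdist.
  apply: leq_trans (@lower _ _ _ _ m _ gs ps nD Hb').
  exact: lg_le ggen (upper Msub bD DDd km).
have inL : forall k, k <= m -> delta ^+ k \in L.
  move=> k km; apply: (ball_in ggen Hs).
  have := Hd (delta ^+ 0) (delta ^+ k) (or_introl (projk 0 (leq0n _))) (or_introl (projk k km)).
  by rewrite /wdist expg0 invg1 mul1g.
have U : uniq (map (fun k => delta ^+ k) (iota 0 m.+1)).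
  by rewrite map_inj_in_uniq ?iota_uniq // => i j _ _; apply: inj.
have := uniq_leq_size U.
move/(_ L) => H.
have : size (map (fun k => delta ^+ k) (iota 0 m.+1)) <= size L.
  apply: H => x /mapP [k]; rewrite mem_iota => /andP [_ kl] ->.
  by apply: inL; rewrite add0n ltnS in kl.
by rewrite size_map size_iota ltnn.
Qed.
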